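(* Let $d,r$ be nonnegative integers with $1\le r\le\binom{m+d}{d}-r_d$. Then $\overline{e}_r(d,m)=\max|V(F_1,\dots,F_r)(\mathbb{F}_q)|$, where the maximum is over all sets $\{F_1,\dots,F_r\}$ of linearly independent projectively reduced homogeneous polynomials of degree $d$ in $\mathbb{F}_q[x_0,\dots,x_m]$ whose leading monomials $\mathrm{lm}(F_1),\dots,\mathrm{lm}(F_r)$ are distinct. Consequently, there is an integer $e_0$ such that $\overline{e}_r(d,m)\le A_r(d,m;e)$ for all $e\ge e_0$.
   Context: $q$ is a prime power, $\mathbb{F}_q$ the finite field with $q$ elements, $m$ a positive integer. A monomial $\mu\neq1$ in $x_0,\dots,x_m$ written $x_0^{a_0}\cdots x_k^{a_k}$ with $a_k>0$ is projectively reduced if $a_0,\dots,a_{k-1}\le q-1$; $1$ is projectively reduced; a polynomial is projectively reduced if it is an $\mathbb{F}_q$-linear combination of projectively reduced monomials. $\overline{\mathbb{M}}_e$ is the set of projectively reduced monomials of degree $e$. $r_d$ is the dimension of the degree-$d$ component of the ideal generated by $\{x_i^qx_j-x_ix_j^q:0\le i<j\le m\}$, so $|\overline{\mathbb{M}}_d|=\binom{m+d}{d}-r_d$. $V(F_1,\dots,F_r)(\mathbb{F}_q)$ is the set of points of $\mathbb{P}^m(\mathbb{F}_q)$ where all $F_i$ vanish. $\overline{e}_r(d,m)$ is the maximum of $|V(G_1,\dots,G_r)(\mathbb{F}_q)|$ over families of $r$ linearly independent projectively reduced homogeneous polynomials of degree $d$. Lexicographic order on monomials: $x_0^{b_0}\cdots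 x_m^{b_m}\prec x_0^{a_0}\cdots x_m^{a_m}$ iff at the first index where exponents differ $a_i>b_i$; $\mathrm{lm}(F)$ is the lexicographically largest monomial occurring in $F$ with nonzero coefficient. For a set $\mathcal{S}$ of monomials, $\Delta_e(\mathcal{S})=\{\mu\in\overline{\mathbb{M}}_e:\text{no }\nu\in\mathcal{S}\text{ divides }\mu\}$, and $A_r(d,m;e)=\max\{|\Delta_e(\mathcal{S})|:\mathcal{S}\subseteq\overline{\mathbb{M}}_d,|\mathcal{S}|=r\}$. *)

(* Defs.v *)
From HB Require Import structures.
From mathcomp Require Import all_boot all_order all_algebra.
From mathcomp Require Import mpoly.
Set Implicit Arguments.
Unset Strict Implicit.
Unset Printing Implicit Defensive.
Import GRing.Theory.
Local Open Scope ring_scope.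

(* Throughout: K is a finite field, q = #|K|, and polynomials live in
   {mpoly K[m.+1]}, i.e. in the variables x_0, ..., x_m (indexed by 'I_m.+1). *)

Section ProjRed.
Variables (K : finFieldType) (m : nat).
Local Notation n := m.+1.

Definition proj_reduced_mon (mu : 'X_{1..n}) : bool :=
  [forall i : 'I_n, forall j : 'I_n,
     ((i < j)%N && (0 < mu j)%N) ==> (mu i <= #|K|.-1)%N].

Definition proj_reduced_poly (F : {mpoly K[n]}) : bool :=
  all proj_reduced_mon (msupp F).

Definition homog_deg (d : nat) (F : {mpoly K[n]}) : bool :=
  all (fun mu => mdeg mu == d) (msupp F).

Definition lin_indep (r : nat) (F : 'I_r -> {mpoly K[n]}) : Prop :=
  forall c : 'I_r -> K, \sum_(i < r) c i *: F i = 0 -> forall i, c i = 0.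

Definition lexlt (nu mu : 'X_{1..n}) : bool :=
  [exists i : 'I_n, [forall j : 'I_n, (j < i)%N ==> (nu j == mu j)]
                     && (nu i < mu i)%N].

Definition is_lm (F : {mpoly K[n]}) (mu : 'X_{1..n}) : Prop :=
  mu \in msupp F /\ forall nu, nu \in msupp F -> nu != mu -> lexlt nu mu.

(* normalized representatives of the points of P^m(F_q): nonzero vectors
   whose first nonzero coordinate equals 1 *)
Definition proj_normalized (v : {ffun 'I_n -> K}) : bool :=
  [exists i : 'I_n, (v i == 1) && [forall j : 'I_n, (j < i)%N ==> (v j == 0)]].

Definition nzeros (r : nat) (F : 'I_r -> {mpoly K[n]}) : nat :=
  #|[set v : {ffun 'I_n -> K} | proj_normalized v &&
                                 [forall i : 'I_r, (F i).@[v] == 0]]|.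

Definition admissible (d r : nat) (F : 'I_r -> {mpoly K[n]}) : Prop :=
  lin_indep F /\ (forall i, proj_reduced_poly (F i) && homog_deg d (F i)).

Definition distinct_lm (r : nat) (F : 'I_r -> {mpoly K[n]}) : Prop :=
  forall (i j : 'I_r) (mu : 'X_{1..n}), is_lm (F i) mu -> is_lm (F j) mu -> i = j.

Definition is_max_nzeros (r : nat) (P : ('I_r -> {mpoly K[n]}) -> Prop)
    (N : nat) : Prop :=
  (exists F, P F /\ nzeros F = N) /\ (forall F, P F -> (nzeros F <= N)%N).

Definition Mbar (e : nat) : {set 'X_{1..n < e.+1}} :=
  [set mu : 'X_{1..n < e.+1} | (mdeg mu == e) && proj_reduced_mon mu].

Definition Delta (d e : nat) (S : {set 'X_{1..n < d.+1}}) : {set 'X_{1..n < e.+1}} :=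
  [set mu in Mbar e | [forall nu in S, ~~ lem (bmnm nu) (bmnm mu)]].

Definition A_r (r d e : nat) : nat :=
  \max_(S : {set 'X_{1..n < d.+1}} | (S \subset Mbar d) && (#|S| == r)) #|Delta e S|.

End ProjRed.

(* Main.v *)
Require Import Defs.
From HB Require Import structures.
From mathcomp Require Import all_boot all_order all_algebra.
From mathcomp Require Import mpoly finfield.
From Stdlib Require Import Classical IndefiniteDescription.
Set Implicit Arguments.
Unset Strict Implicit.
Unset Printing Implicit Defensive.
Import Order.TTheory GRing.Theory.
Local Open Scope ring_scope.

Section Aux.
Variables (K : finFieldType) (m : nat).
Local Notation n := m.+1.
Local Notation P := {mpoly K[n]}.

Lemma lexltE (nu mu : 'X_{1..n}) : mdeg nu = mdeg mu -> lexlt nu mu = (nu < mu)%O.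
Proof.
move=> hd; apply/idP/idP.
- case/existsP=> i /andP[/forallP h lt]; apply/ltmcP => //; exists i => // j ji.
  by apply/eqP; have := h j; rewrite ji.
- case/ltmcP => // i h lt; apply/existsP; exists i; rewrite lt andbT.
  by apply/forallP => j; apply/implyP => /h ->.
Qed.

Lemma msupp_nz (F : P) mu : mu \in msupp F -> F != 0.
Proof. by move=> h; apply/eqP => F0; move: h; rewrite F0 mcoeff_msupp mcoeff0 eqxx. Qed.

Lemma homog_lm d (F : P) : homog_deg d F -> F != 0 -> is_lm F (mlead F).
Proof.
move=> /allP hF nz; split; first exact: mlead_supp.
move=> nu hnu hne; rewrite lexltE; last first.
  by rewrite (eqP (hF _ hnu)) (eqP (hF _ (mlead_supp nz))).
by rewrite lt_neqAle hne msupp_le_mlead.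
Qed.

Lemma is_lm_uniq d (F : P) mu : homog_deg d F -> is_lm F mu -> mu = mlead F.
Proof.
move=> /allP hF [hmu h]; have nz := msupp_nz hmu.
case: (eqVneq mu (mlead F)) => // hne; exfalso.
have := h _ (mlead_supp nz); rewrite eq_sym => /(_ hne).
rewrite lexltE; last by rewrite (eqP (hF _ hmu)) (eqP (hF _ (mlead_supp nz))).
by move/lt_geF; rewrite msupp_le_mlead.
Qed.

Definition rk d (mu : 'X_{1..n}) := #|[set nu : 'X_{1..n < d.+1} | (bmnm nu < mu)%O]|.

Lemma rk_lt d (nu mu : 'X_{1..n}) : mdeg nu = d -> (nu < mu)%O -> (rk d nu < rk d mu)%N.
Proof.
move=> hd lt; apply: proper_card; apply/properP; split.
  by apply/subsetP=> x; rewrite !inE => h; exact: lt_trans h lt.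
have hb : (mdeg nu < d.+1)%N by rewrite hd.
by exists (BMultinom hb); rewrite !inE /= ?ltxx.
Qed.

Lemma max_exists (Pr : nat -> Prop) B : (exists k, Pr k) -> (forall k, Pr k -> (k <= B)%N) ->
  exists N, Pr N /\ forall k, Pr k -> (k <= N)%N.
Proof.
elim: B => [|B IH] ex bd.
  case: ex => k hk; exists k; split => // j hj.
  by have := bd j hj; rewrite leqn0 => /eqP ->.
case: (classic (Pr B.+1)) => h; first by exists B.+1.
apply: IH => // k hk; have := bd k hk; rewrite leq_eqVlt ltnS => /orP[/eqP e|//].
by move: hk; rewrite e.
Qed.


Lemma sum_upd (V : zmodType) r (g : 'I_r -> V) i u :
  \sum_(k < r) (if k == i then u else g k) = \sum_(k < r) g k + (u - g i).
Proof.
rewrite (bigD1 i) //= eqxx [in RHS](bigD1 i) //=.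
rewrite (eq_bigr g); last by move=> k /negbTE ->.
rewrite addrC; rewrite [g i + _]addrC -addrA; congr (_ + _); by rewrite addrC addrNK.
Qed.

Lemma li_nz r (G : 'I_r -> P) : lin_indep G -> forall i, G i != 0.
Proof.
move=> hG i; apply/eqP => Gi0.
pose c := fun k : 'I_r => if k == i then (1 : K) else 0.
have h1 : \sum_(k < r) c k *: G k = 0.
  rewrite (bigD1 i) //= /c eqxx scale1r Gi0 add0r big1 // => k /negbTE ->.
  by rewrite scale0r.
by have := hG c h1 i; rewrite /c eqxx => /eqP; rewrite oner_eq0.
Qed.

Definition upd r (G : 'I_r -> P) i j (x : K) :=
  fun k => if k == j then G j + x *: G i else G k.

Lemma li_upd r (G : 'I_r -> P) i j x : i != j -> lin_indep G -> lin_indep (upd G i j x).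
Proof.
move=> ij hG a ha.
pose b := fun k => if k == i then a i + a j * x else a k.
have hb : \sum_(k < r) b k *: G k = 0.
  have e2 : \sum_(k < r) b k *: G k =
      \sum_(k < r) (if k == i then (a i + a j * x) *: G i else a k *: G k).
    by apply: eq_bigr => k _; rewrite /b; case: eqP => // ->.
  have e1 : \sum_(k < r) a k *: upd G i j x k =
      \sum_(k < r) (if k == j then a j *: (G j + x *: G i) else a k *: G k).
    by apply: eq_bigr => k _; rewrite /upd; case: eqP => // ->.
  rewrite -[RHS]ha e2 e1.
  rewrite !sum_upd; congr (_ + _).
  by rewrite scalerDl scalerDr addrAC subrr add0r addrAC subrr add0r scalerA.
have hbk := hG b hb.
have aj : a j = 0 by have := hbk j; rewrite /b eq_sym (negbTE ij).
move=> k; case: (eqVneq k i) => [->|ki].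
  by have := hbk i; rewrite /b eqxx aj mul0r addr0.
by have := hbk k; rewrite /b (negbTE ki).
Qed.

Lemma all_comb (pr : pred 'X_{1..n}) (p1 p2 : P) x :
  all pr (msupp p1) -> all pr (msupp p2) -> all pr (msupp (p1 + x *: p2)).
Proof.
move=> /allP h1 /allP h2; apply/allP => nu /msuppD_le; rewrite mem_cat => /orP[/h1//|].
by move/msuppZ_le/h2.
Qed.

Definition zpres r (F G : 'I_r -> P) := forall v : {ffun 'I_n -> K},
  (forall i, (F i).@[v] = 0) -> forall i, (G i).@[v] = 0.

Lemma echelon d r (F : 'I_r -> P) : admissible d F ->
  exists G, admissible d G /\ injective (fun i => mlead (G i)) /\ zpres F G.
Proof.
move=> hF.
suff: forall k G, admissible d G -> zpres F G ->
  (\sum_(i < r) rk d (mlead (G i)) < k)%N ->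
  exists G, admissible d G /\ injective (fun i => mlead (G i)) /\ zpres F G.
  by move=> H; apply: (H _ F hF) => //; move=> v h.
elim=> [//|k IH] G [liG redG] zG hk.
case: (boolP [forall i, forall j, (mlead (G i) == mlead (G j)) ==> (i == j)]) => hinj.
  exists G; split => //; split => // i j e.
  by have /forallP/(_ j)/implyP := forallP hinj i; rewrite e eqxx => /(_ isT)/eqP.
move: hinj; rewrite negb_forall => /existsP[i]; rewrite negb_forall => /existsP[j].
rewrite negb_imply => /andP[/eqP e ij].
set mu := mlead (G i).
have nzi := li_nz liG i.
have nzj := li_nz liG j.
have ci : (G i)@_mu != 0 by rewrite mleadc_eq0.
pose x := - ((G j)@_mu / (G i)@_mu).
pose G' := upd G i j x.
have liG' : lin_indep G' by exact: li_upd.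
have redG' : forall k, proj_reduced_poly (G' k) && homog_deg d (G' k).
  move=> l; rewrite /G' /upd; case: eqP => // _.
  by case/andP: (redG j) => r1 h1; case/andP: (redG i) => r2 h2; apply/andP; split; apply: all_comb.
have zG' : zpres F G'.
  move=> v hv l; rewrite /G' /upd; case: eqP => _; last exact: zG.
  by rewrite mevalD mevalZ !zG // mulr0 addr0.
apply: (IH G') => //.
have hlt : (mlead (G' j) < mu)%O.
  have nz' := li_nz liG' j.
  rewrite lt_neqAle; apply/andP; split.
    apply/eqP => e'; move: nz'; rewrite -mleadc_eq0 e' /G' /upd eqxx.
    by rewrite mcoeffD mcoeffZ /x mulNr divfK // subrr eqxx.
  have := mlead_supp nz'; rewrite /G' /upd eqxx => /msuppD_le; rewrite mem_cat.
  by case/orP => h; [rewrite /mu e; exact: msupp_le_mlead h | exact: msupp_le_mlead (msuppZ_le h)].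
have hd : mdeg (mlead (G' j)) = d.
  by have /andP[_ /allP h] := redG' j; apply/eqP/h/mlead_supp/li_nz.
rewrite -ltnS; apply: leq_trans hk; rewrite ltnS.
rewrite (bigD1 j) //= [X in (_ < X)%N](bigD1 j) //=.
rewrite (eq_bigr (fun l => rk d (mlead (G l)))); last first.
  by move=> l /negbTE; rewrite /G' /upd => ->.
by rewrite ltn_add2r -e; apply: rk_lt.
Qed.

End Aux.

Section Span.
Variables (K : finFieldType) (m : nat).
Local Notation n := m.+1.
Local Notation P := {mpoly K[n]}.
Local Notation q := #|K|.
Variables (e : nat) (Z : {set {ffun 'I_n -> K}}) (D : {set 'X_{1..n < e.+1}}).

Definition mono (mu : 'X_{1..n}) (w : {ffun 'I_n -> K}) : K := ('X_[mu] : P).@[w].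

Lemma mono_add a b w : mono (a + b)%MM w = mono a w * mono b w.
Proof. by rewrite /mono mpolyXD mevalM. Qed.

Definition inSpan (f : {ffun 'I_n -> K} -> K) :=
  exists c : 'X_{1..n < e.+1} -> K,
    forall w, w \in Z -> f w = \sum_(nu in D) c nu * mono nu w.

Lemma inSpan_ext f g : (forall w, w \in Z -> f w = g w) -> inSpan f -> inSpan g.
Proof. by move=> h [c hc]; exists c => w wZ; rewrite -h // hc. Qed.

Lemma inSpan0 : inSpan (fun _ => 0).
Proof. by exists (fun _ => 0) => w _; rewrite big1 // => ? _; rewrite mul0r. Qed.

Lemma inSpan_lin a f g : inSpan f -> inSpan g -> inSpan (fun w => a * f w + g w).
Proof.
move=> [c hc] [c' hc']; exists (fun nu => a * c nu + c' nu) => w wZ.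
rewrite hc // hc' // mulr_sumr -big_split /=; apply: eq_bigr => nu _.
by rewrite mulrDl mulrA.
Qed.

Lemma inSpan_sum (T : eqType) (s : seq T) (a : T -> K) (F : T -> {ffun 'I_n -> K} -> K) :
  (forall x, x \in s -> inSpan (F x)) ->
  inSpan (fun w => \sum_(x <- s) a x * F x w).
Proof.
elim: s => [|x s IH] h.
  by apply: inSpan_ext inSpan0 => w _; rewrite big_nil.
have IH' : inSpan (fun w => \sum_(y <- s) a y * F y w).
  by apply: IH => y hy; apply: h; rewrite inE hy orbT.
apply: inSpan_ext (inSpan_lin (a x) (h x (mem_head _ _)) IH') => w _.
by rewrite big_cons.
Qed.


Variables (d r : nat) (G : 'I_r -> P).
Hypothesis hGh : forall i, homog_deg d (G i).
Hypothesis hGnz : forall i, G i != 0.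
Hypothesis hGZ : forall w i, w \in Z -> (G i).@[w] = 0.
Hypothesis hD : forall mu : 'X_{1..n < e.+1}, mdeg mu = e -> proj_reduced_mon K mu ->
  (forall i, ~~ lem (mlead (G i)) mu) -> mu \in D.

Lemma mono_U_q (i : 'I_n) w : mono (U_(i) *+ q)%MM w = w i.
Proof. by rewrite /mono -mpolyXn rmorphXn /= mevalXU expf_card. Qed.

Lemma mono_U (i : 'I_n) w : mono (U_(i))%MM w = w i.
Proof. by rewrite /mono mevalXU. Qed.

Lemma key mu : mdeg mu = e -> inSpan (mono mu).
Proof.
suff H : forall k mu, (rk e mu < k)%N -> mdeg mu = e -> inSpan (mono mu).
  by apply: H (ltnSn _).
elim=> [//|k IH] {}mu hk hmu.
have IH' : forall nu, mdeg nu = e -> (nu < mu)%O -> inSpan (mono nu).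
  by move=> nu hnu lt; exact: (IH nu (leq_trans (rk_lt hnu lt) hk) hnu).
case: (boolP [exists i, lem (mlead (G i)) mu]) => [/existsP[i hi]|hndiv].
  set lam := mlead (G i).
  set rho := (mu - lam)%MM.
  have hmu' : mu = (rho + lam)%MM by rewrite /rho submK.
  have hsupp : forall nu, nu \in msupp (G i) -> mdeg nu = d.
    by move=> nu hnu; apply/eqP; move/allP: (hGh i); apply.
  have hlam : mdeg lam = d by apply: hsupp; apply: mlead_supp.
  have clam : (G i)@_lam != 0 by rewrite mleadc_eq0.
  have eqZ : forall w, w \in Z -> mono mu w =
      \sum_(nu <- [seq x <- msupp (G i) | x != lam])
         (- ((G i)@_nu / (G i)@_lam)) * mono (rho + nu) w.
    move=> w wZ.
    have : ('X_[rho] * G i).@[w] = 0 by rewrite mevalM hGZ // mulr0.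
    rewrite {1}(mpolyE (G i)) mulr_sumr rmorph_sum /=.
    rewrite (bigD1_seq lam) /= ?msupp_uniq ?mlead_supp //.
    rewrite big_filter.
    have tE : forall nu, ('X_[rho] * ((G i)@_nu *: 'X_[nu])).@[w] =
                         (G i)@_nu * mono (rho + nu) w.
      by move=> nu; rewrite -scalerAr -mpolyXD mevalZ.
    rewrite tE -hmu' (eq_bigr _ (fun nu _ => tE nu)) => h.
    have -> : mono mu w = - (\sum_(nu <- msupp (G i) | nu != lam)
                 (G i)@_nu * mono (rho + nu) w) / (G i)@_lam.
      by apply: (mulIf clam); rewrite divfK // mulrC; apply/eqP; rewrite -addr_eq0 h.
    rewrite -sumrN mulr_suml; apply: eq_bigr => nu _.
    by rewrite !mulNr; congr (- _); rewrite mulrAC.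
  apply: inSpan_ext (fun w wZ => esym (eqZ w wZ)) _.
  apply: inSpan_sum => nu; rewrite mem_filter => /andP[hne hnu].
  apply: IH'.
    by rewrite mdegD (hsupp _ hnu) -hlam -mdegD -hmu'.
  by rewrite [X in (_ < X)%O]hmu' ltmc_add2r lt_neqAle hne msupp_le_mlead.
case: (boolP (proj_reduced_mon K mu)) => hred.
  have hb : (mdeg mu < e.+1)%N by rewrite hmu.
  have mD : BMultinom hb \in D.
    apply: hD => // i; apply/negP => hl; move/negP: hndiv; apply.
    by apply/existsP; exists i.
  exists (fun nu => if nu == BMultinom hb then 1 else 0) => w _.
  rewrite (bigD1 (BMultinom hb)) //= eqxx mul1r big1 ?addr0 //.
  by move=> nu /andP[_ /negbTE ->]; rewrite mul0r.
move: hred; rewrite /proj_reduced_mon negb_forall => /existsP[i].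
rewrite negb_forall => /existsP[j]; rewrite negb_imply => /andP[/andP[ij hj] hi].
have q1 := finNzRing_gt1 K.
have hqi : (q <= mu i)%N by rewrite -ltnNge in hi; rewrite -(ltn_predK q1).
have ij' : i != j by rewrite neq_ltn ij.
pose sig := (U_(i) *+ q + U_(j))%MM.
pose sig' := (U_(i) + U_(j) *+ q)%MM.
have hle : (sig <= mu)%MM.
  apply/mnm_lepP => l; rewrite /sig mnmDE mulmnE !mnm1E.
  case: (eqVneq i l) => [<-|il]; first by rewrite eq_sym (negbTE ij') mul1n addn0.
  by rewrite mul0n add0n; case: eqP => // <-.
set rho := (mu - sig)%MM.
have hmu' : mu = (rho + sig)%MM by rewrite /rho submK.
have dsig : mdeg sig' = mdeg sig.
  by rewrite /sig /sig' !mdegD !mdegMn !mdeg1 mul1n addnC.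
have lts : (sig' < sig)%O.
  apply/ltmcP => //; exists i.
    move=> l li; rewrite /sig /sig' !mnmDE !mulmnE !mnm1E.
    have -> : (i == l) = false by apply/negbTE; rewrite neq_ltn li orbT.
    have -> // : (j == l) = false by apply/negbTE; rewrite neq_ltn (ltn_trans li ij) orbT.
  by rewrite /sig /sig' !mnmDE !mulmnE !mnm1E eqxx eq_sym (negbTE ij') /= mul0n mul1n !addn0.
apply: (inSpan_ext (f := mono (rho + sig'))).
  by move=> w _; rewrite hmu' !mono_add !mono_U_q !mono_U.
apply: IH'; first by rewrite mdegD dsig -mdegD -hmu'.
by rewrite [X in (_ < X)%O]hmu' ltmc_add2r.
Qed.

End Span.

Lemma count_le (K : fieldType) (V B : finType) (Z : {set V}) (D : {set B})
  (mo : B -> V -> K) :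
  (forall Pt, Pt \in Z -> exists c : B -> K,
     forall w, w \in Z -> (w == Pt)%:R = \sum_(nu in D) c nu * mo nu w) ->
  (#|Z| <= #|D|)%N.
Proof.
move=> H.
have H' : forall Pt, exists c : B -> K, Pt \in Z ->
    forall w, w \in Z -> (w == Pt)%:R = \sum_(nu in D) c nu * mo nu w.
  move=> Pt; case: (boolP (Pt \in Z)) => hP.
    by case: (H Pt hP) => c hc; exists c.
  by exists (fun _ => 0).
pose cf Pt := proj1_sig (constructive_indefinite_description _ (H' Pt)).
have cfP Pt : Pt \in Z -> forall w, w \in Z ->
    (w == Pt)%:R = \sum_(nu in D) cf Pt nu * mo nu w.
  exact: (proj2_sig (constructive_indefinite_description _ (H' Pt))).
pose A : 'M[K]_(#|Z|, #|D|) := \matrix_(a, b) cf (enum_val a) (enum_val b).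
pose Bm : 'M[K]_(#|D|, #|Z|) := \matrix_(b, a) mo (enum_val b) (enum_val a).
have AB : A *m Bm = 1%:M.
  apply/matrixP => a a'; rewrite !mxE.
  rewrite (eq_bigr (fun b => cf (enum_val a) (enum_val b) * mo (enum_val b) (enum_val a')));
    last by move=> b _; rewrite !mxE.
  rewrite -(big_enum_val (fun nu => cf (enum_val a) nu * mo nu (enum_val a'))).
  rewrite -cfP ?enum_valP //.
  by rewrite (inj_eq enum_val_inj) eq_sym.
have := mxrankM_maxl A Bm; rewrite AB mxrank1 => h.
exact: leq_trans h (rank_leq_col A).
Qed.

Section Ind.
Variables (K : finFieldType) (m : nat).
Local Notation n := m.+1.
Local Notation P := {mpoly K[n]}.
Local Notation q := #|K|.

Lemma fermat (x : K) : x != 0 -> x ^+ q.-1 = 1.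
Proof.
move=> nz; apply: (mulfI nz); rewrite mulr1 -exprS prednK ?expf_card //.
exact: ltnW (finNzRing_gt1 K).
Qed.

Lemma indicator e (Pt : {ffun 'I_n -> K}) : proj_normalized Pt -> (n * q.-1 < e)%N ->
  exists f : P, homog_deg e f /\
    forall w, proj_normalized w -> f.@[w] = (w == Pt)%:R.
Proof.
move=> /existsP[k /andP[/eqP Pk /forallP Pz]] he.
have q1 := finNzRing_gt1 K.
have q0 : (0 < q.-1)%N by rewrite -ltnS prednK // ltnW.
pose g (j : 'I_n) : P := 'X_k ^+ q.-1 - ('X_j - Pt j *: 'X_k) ^+ q.-1.
pose T := (\sum_(j < n | j != k) q.-1)%N.
have hT : (T <= n * q.-1)%N.
  apply: leq_trans (_ : \sum_(j < n) q.-1 <= _)%N; last by rewrite sum_nat_const card_ord.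
  by rewrite [X in (X <= _)%N]big_mkcond /=; apply: leq_sum => j _; case: ifP.
have hg : forall j, g j \is q.-1.-homog.
  move=> j; have X1 : forall l : 'I_n, ('X_l : P) \is 1.-homog.
    by move=> l; rewrite dhomogX; apply/eqP; exact: mdeg1.
  rewrite /g; apply: rpredB; first by have := dhomogMn q.-1 (X1 k); rewrite mul1n.
  have h1 : ('X_j - Pt j *: 'X_k : P) \is 1.-homog by apply: rpredB => //; apply: rpredZ.
  by have := dhomogMn q.-1 h1; rewrite mul1n.
have hPi : \prod_(j < n | j != k) g j \is T.-homog.
  apply: (big_ind2 (fun (p : P) t => p \is t.-homog)) => //.
    exact: dhomog1.
  by move=> a b c d' ha hc; apply: dhomogM.
pose f := 'X_k ^+ (e - T) * \prod_(j < n | j != k) g j.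
exists f; split.
  have -> : e = (1 * (e - T) + T)%N by rewrite mul1n subnK // ltnW // (leq_ltn_trans hT).
  apply: dhomogM => //; apply: dhomogMn; rewrite dhomogX; apply/eqP; exact: mdeg1.
move=> w hw.
have ge : forall j, (g j).@[w] = w k ^+ q.-1 - (w j - Pt j * w k) ^+ q.-1.
  by move=> j; rewrite /g mevalB !rmorphXn /= mevalB mevalZ !mevalXU.
have fE : f.@[w] = w k ^+ (e - T) *
    \prod_(j < n | j != k) (w k ^+ q.-1 - (w j - Pt j * w k) ^+ q.-1).
  by rewrite /f mevalM rmorphXn /= mevalXU rmorph_prod /=; congr (_ * _); apply: eq_bigr.
have eT : (0 < e - T)%N by rewrite subn_gt0 (leq_ltn_trans hT).
rewrite fE; case: (eqVneq w Pt) => [->|wP].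
  rewrite Pk expr1n mul1r big1 //= => j _.
  by rewrite mulr1 subrr expr0n /= eqn0Ngt q0 subr0 expr1n.
rewrite /=.
case: (eqVneq (w k) 0) => [->|wk0].
  by rewrite expr0n eqn0Ngt eT mul0r.
suff [j jk hj] : exists2 j, j != k & w j - Pt j * w k != 0.
  rewrite (bigD1 j) //= (fermat wk0) (fermat hj) subrr mul0r mulr0 //.
case: (eqVneq (w k) 1) => [wk1|wk1].
  have [j hj] : exists j, w j != Pt j.
    apply/existsP; rewrite -negb_forall; apply: contra wP => /forallP h.
    by apply/eqP/ffunP => j; apply/eqP/h.
  exists j; first by apply: contraNneq hj => ->; rewrite Pk wk1.
  by rewrite wk1 mulr1 subr_eq0.
move: hw => /existsP[kw /andP[/eqP wkw /forallP wz]].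
case: (ltngtP kw k) => [lt|gt|eq].
- exists kw; first by rewrite neq_ltn lt.
  by have /implyP/(_ lt)/eqP -> := Pz kw; rewrite mul0r subr0 wkw oner_eq0.
- by have /implyP/(_ gt) := wz k; rewrite (negbTE wk0).
- have ekw : kw = k by apply: val_inj.
  by move: wk1; rewrite -ekw wkw eqxx.
Qed.

End Ind.

Theorem lemma5p6 (K : finFieldType) (m d r : nat) :
  (0 < m)%N -> (1 <= r)%N -> (r <= #|Mbar K m d|)%N ->
  exists N : nat,
    is_max_nzeros (fun F : 'I_r -> {mpoly K[m.+1]} => admissible d F) N /\
    is_max_nzeros (fun F : 'I_r -> {mpoly K[m.+1]} => admissible d F /\ distinct_lm F) N /\
    exists e0 : nat, forall e : nat, (e0 <= e)%N -> (N <= A_r K m r d e)%N.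
Proof.
move=> _ _ hr.
pose Pr := fun N => exists F : 'I_r -> {mpoly K[m.+1]}, admissible d F /\ nzeros F = N.
have ex0 : exists N, Pr N.
  pose mu (i : 'I_r) : 'X_{1..m.+1} := bmnm (enum_val (widen_ord hr i)).
  have muinj : injective mu.
    move=> i j /val_inj /enum_val_inj /(congr1 val) /= e; exact: val_inj.
  exists (nzeros (fun i => 'X_[mu i] : {mpoly K[m.+1]})), (fun i => 'X_[mu i]); split => //.
  split.
    move=> c hc i; have := congr1 (mcoeff (mu i)) hc.
    rewrite raddf_sum mcoeff0 (bigD1 i) //= mcoeffZ mcoeffX eqxx mulr1 big1 ?addr0 //.
    move=> j ji; rewrite mcoeffZ mcoeffX.
    by rewrite (inj_eq muinj) (negbTE ji) mulr0.
  move=> i; rewrite /proj_reduced_poly /homog_deg msuppX /= !andbT.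
  by have := enum_valP (widen_ord hr i); rewrite inE => /andP[-> ->].
have [N [[F [hF eF]] hmax]] : exists N, Pr N /\ forall k, Pr k -> (k <= N)%N.
  apply: (max_exists (B := #|{ffun 'I_m.+1 -> K}|) ex0).
  by move=> k [F [_ <-]]; exact: max_card.
have [G [hG [hinj hz]]] := echelon hF.
have ZFG : (nzeros F <= nzeros G)%N.
  apply: subset_leq_card; apply/subsetP => v; rewrite !inE => /andP[-> /forallP h] /=.
  apply/forallP => i; apply/eqP; apply: hz => // j; exact/eqP.
have eG : nzeros G = N.
  apply/eqP; rewrite eqn_leq; apply/andP; split; first by apply: hmax; exists G.
  by rewrite -eF.
have hGh : forall i, homog_deg d (G i) by move=> i; case/andP: (hG.2 i).
exists N; split; [split|split; [split|]].
- by exists F.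
- by move=> F' hF'; apply: hmax; exists F'.
- exists G; split => //; split => //.
  move=> i j mu hi hj; apply: hinj => /=.
  by rewrite -(is_lm_uniq (hGh i) hi) -(is_lm_uniq (hGh j) hj).
- by move=> F' [hF' _]; apply: hmax; exists F'.
exists (m.+1 * #|K|.-1).+1 => e he.
pose toB (mu : 'X_{1..m.+1}) : 'X_{1..m.+1 < d.+1} := insubd bm0 mu.
have hGd : forall i, mdeg (mlead (G i)) = d.
  by move=> i; apply/eqP; move/allP: (hGh i); apply; apply/mlead_supp/li_nz; case: hG.
have toBK : forall i, bmnm (toB (mlead (G i))) = mlead (G i).
  by move=> i; apply: insubdK; rewrite /= unfold_in hGd.
set S := [set toB (mlead (G i)) | i : 'I_r].
have cS : #|S| = r.
  rewrite card_imset ?card_ord // => i j /(congr1 (@bmnm _ _)); rewrite !toBK; exact: hinj.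
have SM : S \subset Mbar K m d.
  apply/subsetP => x /imsetP[i _ ->]; rewrite inE toBK hGd eqxx /=.
  have /andP[hred _] := hG.2 i; move/allP: hred; apply.
  by apply/mlead_supp/li_nz; case: hG.
apply: leq_trans (_ : #|Delta K e S| <= _)%N; last first.
  by apply: (leq_bigmax_cond (F := fun S => #|Delta K e S|)); rewrite SM cS eqxx.
rewrite -eG.
set Z := [set v | proj_normalized v && [forall i, (G i).@[v] == 0]].
apply: (count_le (mo := fun nu w => mono (bmnm nu) w)) => Pt hPt.
have hZ : forall w, w \in Z -> proj_normalized w.
  by move=> w; rewrite inE => /andP[].
have [f [hf fE]] := indicator (hZ _ hPt) he.
suff [c hc] : @inSpan K m e Z (Delta K e S) (fun w => f.@[w]).
  by exists c => w wZ; rewrite -hc // fE // hZ.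
apply: (inSpan_ext (f := fun w => \sum_(nu <- msupp f) f@_nu * mono nu w)).
  move=> w _; rewrite [in RHS](mpolyE f) rmorph_sum /=; apply: eq_bigr => nu _.
  by rewrite mevalZ.
apply: inSpan_sum => nu hnu.
apply: (key (d := d) (G := G)).
- exact: hGh.
- by apply: li_nz; case: hG.
- by move=> w i; rewrite inE => /andP[_ /forallP /(_ i) /eqP].
- move=> mu hmu hred hdiv; rewrite inE; apply/andP; split.
    by rewrite inE hmu eqxx hred.
  apply/forallP => x; apply/implyP => /imsetP[i _ ->]; rewrite toBK; exact: hdiv.
- by apply/eqP; move/allP: hf; apply.
Qed.
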